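(* Let $F$ be a graph of diameter $2$, $n=|V(F)|$, $t=\delta(F)$ with $t\ge 2$, and let $l>n$ be an integer. Then $\delta_i<\delta_l$ for every $i\in\{l+1,l+2,\dots,l+t-1\}$.
   Context: All graphs are simple, finite, undirected. The $F$-degree of a vertex $v$ in $G$ is the number of subgraphs of $G$ (not necessarily induced) isomorphic to $F$ and containing $v$. $A_{2l-1}$ is the graph with vertex set $\{1,\dots,2l-1\}$ in which distinct $i,j$ are adjacent iff $|i-j|\le l-1$; $F_{2l}$ is obtained from $A_{2l-1}$ by adding a new vertex $2l$ joined exactly to $1,\dots,t$. $z_i$ is the $F$-degree of $i$ in $A_{2l-1}$, $f_i$ the $F$-degree of $i$ in $F_{2l}$, and $\delta_i=f_i-z_i$. *)

(* Defs.v *)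
From mathcomp Require Import all_boot all_order all_algebra.
Set Implicit Arguments. Unset Strict Implicit. Unset Printing Implicit Defensive.

Definition simple_graph (T : finType) (e : rel T) : Prop :=
  symmetric e /\ irreflexive e.

Fixpoint within (T : finType) (e : rel T) (k : nat) (u v : T) : bool :=
  match k with
  | 0 => u == v
  | k'.+1 => within e k' u v || [exists w, e u w && within e k' w v]
  end.

(* dist(u,v) <= k  iff  within e k u v.  The diameter is d iff all distances
   are <= d and some distance is > d-1 (i.e. equals d). *)
Definition has_diameter (T : finType) (e : rel T) (d : nat) : Prop :=
  (forall u v : T, within e d u v) /\ (exists u v : T, ~~ within e d.-1 u v).

Definition degree (T : finType) (e : rel T) (v : T) : nat := #|[set w | e v w]|.

Definition is_min_degree (T : finType) (e : rel T) (t : nat) : Prop :=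
  (exists v : T, degree e v = t) /\ (forall v : T, t <= degree e v).

(* A subgraph of G = (T, e) is a pair (W, S) with W a vertex set and S a set of
   edges of G (2-element sets {x,y} with e x y) with both ends in W. *)
Definition is_F_copy (VF : finType) (eF : rel VF) (T : finType) (e : rel T)
    (p : {set T} * {set {set T}}) : bool :=
  let W := p.1 in let S := p.2 in
  [forall s in S, [exists x, [exists y,
      [&& x \in W, y \in W, e x y & s == [set x; y]]]]] &&
  [exists f : {ffun VF -> T},
      [&& injectiveb f, f @: setT == W &
          [forall a, forall b, eF a b == ([set f a; f b] \in S)]]].

Definition Fdeg (VF : finType) (eF : rel VF) (T : finType) (e : rel T) (v : T) : nat :=
  #|[set p | is_F_copy eF e p && (v \in p.1)]|.

(* F-degree of the vertex labelled i (labels 1..N, ordinal i-1) in a graph on 'I_N. *)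
Definition Fdeg_lab (VF : finType) (eF : rel VF) (N : nat) (e : rel 'I_N) (i : nat) : nat :=
  #|[set p | is_F_copy eF e p && [exists v in p.1, val v == i.-1]]|.

(* A_{2l-1}: vertices 1..2l-1 (ordinal k is vertex k+1), i ~ j iff 0<|i-j|<=l-1. *)
Definition A_graph (l : nat) : rel 'I_(l.*2.-1) :=
  fun i j => [&& i != j, (i <= j + (l - 1))%N & (j <= i + (l - 1))%N].

(* F_{2l}: vertices 1..2l (ordinal k is vertex k+1); A_{2l-1} on 1..2l-1 plus
   vertex 2l (ordinal 2l-1) joined exactly to 1..t (ordinals 0..t-1). *)
Definition F_graph (l t : nat) : rel 'I_(l.*2) :=
  fun i j =>
    let top := l.*2.-1 in
    (i != j) &&
    [|| [&& (i < top)%N, (j < top)%N, (i <= j + (l - 1))%N & (j <= i + (l - 1))%N],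
        (i == top :> nat) && (j < t)%N
      | (j == top :> nat) && (i < t)%N].

Definition z_deg (VF : finType) (eF : rel VF) (l i : nat) : nat :=
  @Fdeg_lab VF eF l.*2.-1 (@A_graph l) i.

Definition f_deg (VF : finType) (eF : rel VF) (l t i : nat) : nat :=
  @Fdeg_lab VF eF l.*2 (@F_graph l t) i.

Definition delta_deg (VF : finType) (eF : rel VF) (l t i : nat) : int :=
  (f_deg eF l t i)%:Z - (z_deg eF l i)%:Z.

(* Main.v *)
Require Import Defs.
From mathcomp Require Import all_boot all_order all_algebra zify.
Set Implicit Arguments. Unset Strict Implicit. Unset Printing Implicit Defensive.
Import Order.TTheory GRing.Theory Num.Theory.
Local Open Scope ring_scope.

Definition imP (T T' : finType) (g : T -> T') (p : {set T} * {set {set T}}) :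
  {set T'} * {set {set T'}} := (g @: p.1, [set g @: s | s : {set T} in p.2]).

Lemma imset2E (T T' : finType) (g : T -> T') x y : g @: [set x; y] = [set g x; g y].
Proof. by rewrite imsetU1 imset_set1. Qed.

Lemma imset_in_inj (T T' : finType) (g : T -> T') (W A B : {set T}) :
  {in W &, injective g} -> A \subset W -> B \subset W -> g @: A = g @: B -> A = B.
Proof.
move=> ginj AW BW.
have key : forall A B : {set T}, A \subset W -> B \subset W -> g @: A = g @: B -> A \subset B.
  move=> A1 B1 A1W B1W E; apply/subsetP => x xA.
  have : g x \in g @: B1 by rewrite -E imset_f.
  case/imsetP => y yB gxy.
  by rewrite (ginj x y (subsetP A1W x xA) (subsetP B1W y yB) gxy).
move=> E; apply/eqP; rewrite eqEsubset; apply/andP; split; first exact: key.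
exact: key.
Qed.

Lemma copy_edges (VF T : finType) (eF : rel VF) (e : rel T) p s :
  is_F_copy eF e p -> s \in p.2 ->
  exists x y, [/\ x \in p.1, y \in p.1, e x y & s = [set x; y]].
Proof.
case/andP => /forallP HS _ sS.
move: (HS s); rewrite sS /= => /existsP [x /existsP [y /and4P [xW yW exy /eqP ->]]].
by exists x, y.
Qed.

Lemma copy_sub (VF T : finType) (eF : rel VF) (e : rel T) p s :
  is_F_copy eF e p -> s \in p.2 -> s \subset p.1.
Proof.
move=> H sS; have [x [y [xW yW _ ->]]] := copy_edges H sS.
by apply/subsetP => z; rewrite !inE => /orP [] /eqP ->.
Qed.

Lemma copy_map (VF T T' : finType) (eF : rel VF) (e : rel T) (e' : rel T')
  (g : T -> T') (p : {set T} * {set {set T}}) :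
  is_F_copy eF e p -> {in p.1 &, injective g} ->
  {in p.1 &, forall x y, e x y -> e' (g x) (g y)} ->
  is_F_copy eF e' (imP g p).
Proof.
move=> Hp ginj ge.
have HS' := copy_edges Hp.
have Hsub := copy_sub Hp.
move: Hp HS' Hsub ginj ge.
case: p => W S /=; rewrite /is_F_copy /imP /=.
move=> /andP [_ /existsP [f /and3P [finj /eqP fW /forallP fE]]] HS' Hsub ginj ge.
apply/andP; split.
- apply/forallP => s'; apply/implyP => /imsetP [s sS ->].
  have [x [y [xW yW exy ->]]] := HS' s sS.
  apply/existsP; exists (g x); apply/existsP; exists (g y).
  by rewrite !imset_f //= ge // imset2E eqxx.
- apply/existsP; exists [ffun a => g (f a)].
  have fW' : forall a, f a \in W by move=> a; rewrite -fW imset_f.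
  apply/and3P; split.
  + apply/injectiveP => a b; rewrite !ffunE => H.
    apply: (injectiveP _ finj); exact: ginj (fW' a) (fW' b) H.
  + rewrite -fW -imset_comp; apply/eqP/eq_imset => a; by rewrite ffunE.
  + apply/forallP=> a; apply/forallP=> b; rewrite !ffunE -imset2E.
    move/forallP: (fE a) => /(_ b) /eqP ->.
    have fab : [set f a; f b] \subset W.
      by apply/subsetP => z; rewrite !inE => /orP [] /eqP ->.
    apply/eqP; apply/idP/idP; first by move=> H; apply: imset_f.
    case/imsetP => s sS E.
    by rewrite (imset_in_inj ginj fab (Hsub s sS) E).
Qed.

Lemma imP_inj (T T' : finType) (h : T -> T') : injective h -> injective (imP h).
Proof.
move=> hinj [W1 S1] [W2 S2]; rewrite /imP /= => [[E1 E2]].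
by rewrite (imset_inj hinj E1) (imset_inj (imset_inj hinj) E2).
Qed.

Lemma imset_back (T T' : finType) (h : T -> T') (k : T' -> T) (W : {set T'}) :
  {in W, forall y, h (k y) = y} -> h @: (k @: W) = W.
Proof.
move=> hk; rewrite -imset_comp -[RHS]imset_id; apply: eq_in_imset => y yW /=.
exact: hk.
Qed.

Lemma transfer (VF T T' : finType) (eF : rel VF) (e : rel T) (e' : rel T')
  (h : T -> T') (k : T' -> T) (Q : pred T') (R : {set T} -> bool)
  (R' : {set T'} -> bool) :
  injective h ->
  (forall x y, e x y -> e' (h x) (h y)) ->
  (forall y, Q y -> h (k y) = y) ->
  (forall x, Q (h x)) ->
  (forall x y, Q x -> Q y -> e' x y -> e (k x) (k y)) ->
  (forall W : {set T}, R' (h @: W) = R W) ->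
  #|[set p | is_F_copy eF e p && R p.1]| =
  #|[set p | is_F_copy eF e' p && [forall y in p.1, Q y] && R' p.1]|.
Proof.
move=> hinj he hk Qh ke RR.
rewrite -(card_imset _ (imP_inj hinj)); apply: eq_card => p'.
rewrite [in RHS]inE; apply/imsetP/idP.
- case=> p; rewrite inE => /andP [cp rp] ->.
  have -> : is_F_copy eF e' (imP h p).
    by apply: (copy_map cp) => [x y _ _|x y _ _]; [exact: hinj|exact: he].
  rewrite /imP /= RR rp andbT; apply/forallP => y; apply/implyP.
  by case/imsetP => x _ ->.
- case/andP => /andP [cp /forallP allQ] r'.
  have QW : forall y, y \in p'.1 -> Q y by move=> y yW; move/implyP: (allQ y); apply.
  have hkW : {in p'.1, forall y, h (k y) = y} by move=> y /QW; exact: hk.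
  exists (imP k p'); last first.
    case: p' cp allQ r' QW hkW => W S cp _ _ QW hkW; rewrite /imP /=.
    rewrite imset_back //; congr pair.
    rewrite -imset_comp -[LHS]imset_id; apply: eq_in_imset => s sS /=.
    by rewrite imset_back // => y ys; apply: hkW; exact: (subsetP (copy_sub cp sS)).
  rewrite inE (copy_map (e:=e') cp).
  + by rewrite /imP /= -RR imset_back.
  + by move=> x y xW yW E; rewrite -(hkW x xW) -(hkW y yW) E.
  + by move=> x y xW yW; apply: ke; apply: QW.
Qed.

Lemma exv (N : nat) (W : {set 'I_N}) (j : nat) :
  [exists v in W, val v == j] = [exists v in W, val v == j].
Proof. by []. Qed.

Lemma z_eq (VF : finType) (eF : rel VF) (l t j : nat) : (0 < l)%N ->
  z_deg eF l j = #|[set p | is_F_copy eF (@F_graph l t) p &&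
     [forall y in p.1, (val y < l.*2.-1)%N] && [exists v in p.1, val v == j.-1]]|.
Proof.
move=> l0.
have d0lt : (0 < l.*2.-1)%N by lia.
pose d0 : 'I_(l.*2.-1) := Ordinal d0lt.
pose h : 'I_(l.*2.-1) -> 'I_(l.*2) := widen_ord (leq_pred _).
pose k : 'I_(l.*2) -> 'I_(l.*2.-1) := fun y => insubd d0 (val y).
have valk : forall y : 'I_(l.*2), (val y < l.*2.-1)%N -> val (k y) = val y.
  by move=> y yl; rewrite /k insubdK.
rewrite /z_deg /Fdeg_lab.
apply: (@transfer VF _ _ eF _ _ h k (fun y => (val y < l.*2.-1)%N) (fun W => [exists v in W, val v == j.-1]) (fun W => [exists v in W, val v == j.-1])).
- by move=> x y /(congr1 val) /= /val_inj.
- move=> x y; rewrite /A_graph /F_graph -!val_eqE /=.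
  have := ltn_ord x; have := ltn_ord y; lia.
- by move=> y yl; apply: val_inj; rewrite /= valk.
- by move=> x /=; exact: ltn_ord.
- move=> x y xl yl; have vx := valk x xl; have vy := valk y yl; move: vx vy xl yl; rewrite /A_graph /F_graph -!val_eqE.
  case: (k x) => a ap; case: (k y) => b bp; case: x => x xp; case: y => y yp /=; lia.
- move=> W; apply/existsP/existsP => [[v /andP [/imsetP [x xW ->] /= E]]|[v /andP [vW E]]].
    by exists x; rewrite xW.
  by exists (h v); rewrite imset_f.
Qed.

Lemma exvE (N : nat) (W : {set 'I_N}) (x : 'I_N) (j : nat) :
  val x = j -> [exists v in W, val v == j] = (x \in W).
Proof.
move=> xj; apply/existsP/idP => [[v /andP [vW /eqP E]]|xW].
  by have -> : x = v by apply: val_inj; rewrite E.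
by exists x; rewrite xW xj eqxx.
Qed.

Definition Dset (VF : finType) (eF : rel VF) (l t : nat) (top x : 'I_(l.*2)) :=
  [set p | is_F_copy eF (@F_graph l t) p && (top \in p.1) && (x \in p.1)].

Lemma delta_eq (VF : finType) (eF : rel VF) (l t j : nat) (top x : 'I_(l.*2)) :
  (0 < l)%N -> val top = l.*2.-1 -> val x = j.-1 ->
  delta_deg eF l t j = (#|Dset eF t top x|)%:Z.
Proof.
move=> l0 vt vx.
rewrite /delta_deg (z_eq eF t j l0) /f_deg /Fdeg_lab.
set A := [set p | _ && _].
rewrite -(cardsID [set p : {set 'I_(l.*2)} * {set {set 'I_(l.*2)}} | top \in p.1] A).
have -> : A :&: [set p : {set 'I_(l.*2)} * {set {set 'I_(l.*2)}} | top \in p.1] = Dset eF t top x.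
  apply/setP => p; rewrite !inE (exvE _ vx); by case: (is_F_copy _ _ _); case: (top \in _); case: (x \in _).
have -> : A :\: [set p : {set 'I_(l.*2)} * {set {set 'I_(l.*2)}} | top \in p.1] = [set p | is_F_copy eF (@F_graph l t) p &&
     [forall y in p.1, (val y < l.*2.-1)%N] && [exists v in p.1, val v == j.-1]].
  apply/setP => p; rewrite !inE.
  have -> : [forall y in p.1, (val y < l.*2.-1)%N] = (top \notin p.1).
    apply/forallP/idP => [H|H y].
      apply/negP => tW; move/implyP: (H top) => /(_ tW); rewrite vt ltnn //.
    apply/implyP => yW; have : y != top by apply/eqP => E; rewrite -E yW in H.
    rewrite -val_eqE vt; case: y {yW} => y yp /=; lia.
  by case: (is_F_copy _ _ _); case: (top \in _); case: [exists _ in _, _].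
by rewrite PoszD addrK.
Qed.

Lemma FgE (l t : nat) (x y : 'I_(l.*2)) : @F_graph l t x y =
  (val x != val y) &&
    [|| [&& (val x < l.*2.-1)%N, (val y < l.*2.-1)%N, (val x <= val y + (l - 1))%N & (val y <= val x + (l - 1))%N],
        (val x == l.*2.-1) && (val y < t)%N
      | (val y == l.*2.-1) && (val x < t)%N].
Proof. by rewrite /F_graph -val_eqE. Qed.

Definition sw (N : nat) (a b : 'I_N) (x : 'I_N) := if x == a then b else if x == b then a else x.

Lemma valsw (N : nat) (a b x : 'I_N) :
  val (sw a b x) = if val x == val a then val b else if val x == val b then val a else val x.
Proof. rewrite /sw !val_eqE. case: (x == a) => /=. done. by case: (x == b). Qed.

Lemma swK (N : nat) (a b : 'I_N) : involutive (sw a b).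
Proof.
move=> x; rewrite /sw; case: (eqVneq x a) => [->|xa].
  by case: (eqVneq b a) => [->|ba]; rewrite ?eqxx // (negPf ba) eqxx.
case: (eqVneq x b) => [->|xb]; first by rewrite eqxx.
by rewrite (negPf xa) (negPf xb).
Qed.

Lemma sw_inj (N : nat) (a b : 'I_N) : injective (sw a b).
Proof. exact: inv_inj (swK a b). Qed.

Lemma sw_edge (l t : nat) (iv lv : 'I_(l.*2)) :
  (t < l)%N -> (l <= val iv)%N -> (val iv < l.*2.-1)%N -> val lv = l.-1 ->
  forall x y, x != lv -> y != lv -> @F_graph l t x y -> @F_graph l t (sw iv lv x) (sw iv lv y).
Proof.
move=> tl li ilt vl x y; rewrite -!val_eqE !FgE !valsw vl.
case: iv li ilt => a ap /= li ilt; case: x => x xp; case: y => y yp /=.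
case E1: (x == a); case E2: (x == l.-1);
case E3: (y == a); case E4: (y == l.-1) => /=; lia.
Qed.

Lemma card_lt (VF : finType) (eF : rel VF) (l t : nat) (top iv lv w : 'I_(l.*2))
  (p0 : {set 'I_(l.*2)} * {set {set 'I_(l.*2)}}) :
  (t < l)%N -> (l <= val iv)%N -> (val iv < l.*2.-1)%N -> val lv = l.-1 ->
  val top = l.*2.-1 -> val w = 0%N ->
  p0 \in Dset eF t top lv -> iv \notin p0.1 -> [set lv; w] \in p0.2 ->
  (#|Dset eF t top iv| < #|Dset eF t top lv|)%N.
Proof.
move=> tl li ilt vl vt vw p0D niv w2.
have ne : forall a b : 'I_(l.*2), val a != val b -> a != b.
  by move=> a b; rewrite val_eqE.
have ivlv : iv != lv by apply: ne; rewrite vl; lia.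
have swiv : sw iv lv iv = lv by rewrite /sw eqxx.
have swlv : sw iv lv lv = iv by rewrite /sw eq_sym (negPf ivlv) eqxx.
have swfix : forall z, z != iv -> z != lv -> sw iv lv z = z.
  by move=> z zi zl; rewrite /sw (negPf zi) (negPf zl).
have topiv : top != iv by apply: ne; rewrite vt; lia.
have toplv : top != lv by apply: ne; rewrite vt vl; lia.
have notin : forall W : {set 'I_(l.*2)}, lv \notin W -> iv \notin sw iv lv @: W.
  move=> W lW; apply/imsetP => [[z zW E]].
  have : z = lv by rewrite -[z](swK iv lv) -E swiv.
  by move=> zl; move: zW; rewrite zl (negPf lW).
pose Phi := fun p : {set 'I_(l.*2)} * {set {set 'I_(l.*2)}} =>
  if lv \in p.1 then p else imP (sw iv lv) p.
have Himg : forall p, p \in Dset eF t top iv -> Phi p \in Dset eF t top lv.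
  move=> p; rewrite !inE => /andP [/andP [cp tp] ip]; rewrite /Phi; case: ifP => lp.
    by rewrite cp tp lp.
  have cq : is_F_copy eF (@F_graph l t) (imP (sw iv lv) p).
    apply: (copy_map cp) => [x y _ _|x y xW yW]; first exact: sw_inj.
    apply: sw_edge => //; apply/eqP => E.
      by rewrite E lp in xW.
    by rewrite E lp in yW.
  rewrite cq /imP /=; apply/andP; split; last by apply/imsetP; exists iv.
  by apply/imsetP; exists top; rewrite ?swfix.
have Hinj : {in Dset eF t top iv &, injective Phi}.
  move=> p1 p2; rewrite !inE => /andP [_ i1] /andP [_ i2]; rewrite /Phi.
  case: ifP => l1; case: ifP => l2 //.
  - by move=> E; move: i1; rewrite E /imP /=; move/negbT: l2 => /notin /negPf ->.
  - by move=> E; move: i2; rewrite -E /imP /=; move/negbT: l1 => /notin /negPf ->.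
  - move=> E; exact: (@imP_inj _ _ (sw iv lv) (@sw_inj _ iv lv) p1 p2 E).
rewrite -(card_in_imset Hinj); apply: proper_card; apply/properP; split.
  by apply/subsetP => q /imsetP [p pD ->]; exact: Himg.
exists p0 => //; apply/imsetP => [[p pD E]].
move: pD; rewrite inE => /andP [/andP [cp tp] ip].
move: E; rewrite /Phi; case: ifP => lp E.
  by move: niv; rewrite E ip.
move: w2; rewrite E => /imsetP [s sS Es].
have [x [y [xW yW exy sE]]] := copy_edges cp sS.
have wiv : w != iv by apply: ne; rewrite vw; move: li ilt; clear; lia.
have wlv : w != lv by apply: ne; rewrite vw vl; move: li ilt; clear; lia.
have back : forall z, z \in s -> val z = val iv \/ val z = 0%N.
  move=> z zs; have : sw iv lv z \in [set lv; w] by rewrite Es imset_f.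
  rewrite !inE => /orP [] /eqP e.
    by left; rewrite -[z](swK iv lv) e swlv.
  by right; rewrite -[z](swK iv lv) e swfix.
have vx : val x = val iv \/ val x = 0%N by apply: back; rewrite sE !inE eqxx.
have vy : val y = val iv \/ val y = 0%N by apply: back; rewrite sE !inE eqxx orbT.
move: exy; rewrite FgE; case: vx => ->; case: vy => ->; move: li ilt tl; clear; lia.
Qed.

Definition Sid (VF : finType) (eF : rel VF) : {set {set VF}} :=
  [set s | [exists a, exists b, eF a b && (s == [set a; b])]].

Lemma set2_edge (VF : finType) (eF : rel VF) a b a' b' :
  simple_graph eF -> eF a' b' -> [set a; b] = [set a'; b'] -> eF a b.
Proof.
case=> sym irr e' E.
have ne' : a' != b' by apply/eqP => E'; rewrite E' irr in e'.
have ma : a \in [set a'; b'] by rewrite -E !inE eqxx.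
have mb : b \in [set a'; b'] by rewrite -E !inE eqxx orbT.
have ma' : a' \in [set a; b] by rewrite E !inE eqxx.
have mb' : b' \in [set a; b] by rewrite E !inE eqxx orbT.
rewrite !inE in ma mb ma' mb'.
case/orP: ma => /eqP ea; case/orP: mb => /eqP eb; subst.
all: try done; try by rewrite sym.
all: by move: ne' ma' mb'; rewrite !orbb => /eqP ne /eqP ? /eqP ?; subst.
Qed.

Lemma copy_id (VF : finType) (eF : rel VF) :
  simple_graph eF -> is_F_copy eF eF (setT, Sid eF).
Proof.
move=> sg; apply/andP; split.
  apply/forallP => s; apply/implyP; rewrite inE => /existsP [a /existsP [b /andP [eab /eqP ->]]].
  by apply/existsP; exists a; apply/existsP; exists b; rewrite !inE eab eqxx.
apply/existsP; exists [ffun a => a]; apply/and3P; split.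
- by apply/injectiveP => a b; rewrite !ffunE.
- by rewrite /= (eq_imset _ (ffunE _)) imset_id.
- apply/forallP => a; apply/forallP => b; rewrite !ffunE /Sid inE.
  apply/eqP; apply/idP/idP => [eab|/existsP [a' /existsP [b' /andP [e' /eqP E]]]].
    by apply/existsP; exists a; apply/existsP; exists b; rewrite eab eqxx.
  exact: set2_edge sg e' E.
Qed.

Lemma witness (VF : finType) (eF : rel VF) (l t : nat) (top iv lv : 'I_(l.*2))
  (v0 u0 w0 : VF) :
  simple_graph eF -> degree eF v0 = t -> (#|VF| < l)%N ->
  val top = l.*2.-1 -> val lv = l.-1 -> (l <= val iv)%N -> (val iv < l.*2.-1)%N ->
  v0 != u0 -> ~~ eF v0 u0 -> eF v0 w0 -> eF w0 u0 ->
  exists p0 w, [/\ p0 \in Dset eF t top lv, iv \notin p0.1,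
                   [set lv; w] \in p0.2 & val w = 0%N].
Proof.
move=> sg dv nl vt vl li ilt vu nvu vw wu.
have [sym irr] := sg.
pose S := [set a | eF v0 a].
pose O := [set a | ~~ eF v0 a && (a != v0) && (a != u0)].
pose s1 := w0 :: rem w0 (enum S).
pose L := s1 ++ enum O.
have w0S : w0 \in enum S by rewrite mem_enum inE.
have s1S : forall a, a \in s1 -> a \in S.
  move=> a; rewrite inE => /orP [/eqP ->|/mem_rem]; last by rewrite mem_enum.
  by rewrite inE.
have uL : uniq L.
  rewrite cat_uniq enum_uniq andbT /s1 cons_uniq rem_uniq ?enum_uniq // andbT.
  rewrite (mem_rem_uniq _ (enum_uniq _)) !inE eqxx /=.
  apply/hasPn => a; rewrite mem_enum inE => /andP [/andP [na _] _].
  by apply/negP => /s1S; rewrite inE (negPf na).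
have sL : (size L <= #|VF|)%N.
  by move/card_uniqP: uL => <-; exact: max_card.
have ss1 : size s1 = t.
  have pos : (0 < size (enum S))%N by move: w0S; case: (enum S).
  by rewrite /= size_rem // prednK // -cardE -dv.
have hl2 : (2 <= l)%N by move: li ilt; clear; lia.
have inS : forall a, eF v0 a -> a \in s1.
  move=> a va; rewrite /s1; case: (eqVneq a w0) => [->|ne]; first by rewrite mem_head.
  by rewrite inE (mem_rem_uniq _ (enum_uniq _)) !inE ne /= mem_enum inE va orbT.
have idxS : forall a, eF v0 a -> (index a L < t)%N.
  by move=> a va; rewrite index_cat inS // -ss1 index_mem inS.
have inL : forall a, a != v0 -> a != u0 -> a \in L.
  move=> a av au; rewrite mem_cat; case E: (eF v0 a); first by rewrite inS.
  by rewrite orbC mem_enum inE E av au.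
have idxw : index w0 L = 0%N by rewrite index_cat mem_head /= eqxx.
have rng : forall c, c != v0 -> c != u0 -> (index c L < l.-1)%N.
  move=> c cv cu; have h : (index c L < size L)%N by rewrite index_mem; exact: inL.
  move: h sL nl; clear; lia.
pose fn a := if a == v0 then l.*2.-1 else if a == u0 then l.-1 else index a L.
have fnlt : forall a, (fn a < l.*2)%N.
  move=> a; rewrite /fn; case: ifP => _; first by move: hl2; clear; lia.
  case: ifP => _; first by move: hl2; clear; lia.
  have h : (index a L <= size L)%N := index_size a L; move: h sL nl; clear; lia.
pose phi a : 'I_(l.*2) := insubd top (fn a).
have vphi : forall a, val (phi a) = fn a by move=> a; rewrite /phi insubdK //; exact: fnlt.
have phi_inj : injective phi.
  move=> a b E; have : fn a = fn b by rewrite -!vphi E.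
  rewrite /fn; case: (eqVneq a v0) => [->|av]; case: (eqVneq b v0) => [->|bv] //.
  - case: (eqVneq b u0) => [_|bu]; first by move: hl2; clear; lia.
    by have := rng b bv bu; move: hl2; clear; lia.
  - case: (eqVneq a u0) => [_|au]; first by move: hl2; clear; lia.
    by have := rng a av au; move: hl2; clear; lia.
  case: (eqVneq a u0) => [->|au]; case: (eqVneq b u0) => [->|bu] //.
  - by have := rng b bv bu; clear; lia.
  - by have := rng a av au; clear; lia.
  move=> ie; rewrite -(nth_index a (inL a av au)) ie.
  exact: nth_index (inL b bv bu).
have tl : (t < l)%N.
  have : (t <= #|VF|)%N by rewrite -dv; exact: max_card.
  by move: nl; clear; lia.
have fnv : forall a, a != v0 -> (fn a <= l.-1)%N.
  move=> a av; rewrite /fn (negPf av); case: ifP => au //.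
  by have := rng a av (negbT au); clear; lia.
have fnS : forall a, eF v0 a -> fn a = index a L.
  move=> a va; rewrite /fn; case: (eqVneq a v0) => [E|av]; first by rewrite E irr in va.
  by case: (eqVneq a u0) => [E|au] //; rewrite E (negPf nvu) in va.
have edge : {in setT &, forall x y, eF x y -> @F_graph l t (phi x) (phi y)}.
  move=> x y _ _ exy; rewrite FgE !vphi.
  have xy : fn x != fn y.
    by apply/eqP => E; have xy := phi_inj x y (val_inj (etrans (vphi x) (etrans E (esym (vphi y))))); rewrite xy irr in exy.
  case: (eqVneq x v0) => [xv|xv].
    have fx : fn x = l.*2.-1 by rewrite /fn xv eqxx.
    have fy : (fn y < t)%N by rewrite fnS -?xv // ; apply: idxS; rewrite -xv.
    move: xy fx fy tl; move: (fn x) (fn y) => X Y; clear; lia.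
  case: (eqVneq y v0) => [yv|yv].
    have fy : fn y = l.*2.-1 by rewrite /fn yv eqxx.
    have vx : eF v0 x by rewrite -yv sym.
    have fx : (fn x < t)%N by rewrite fnS //; apply: idxS.
    move: xy fx fy tl; move: (fn x) (fn y) => X Y; clear; lia.
  have fx := fnv x xv; have fy := fnv y yv.
  move: xy fx fy hl2; move: (fn x) (fn y) => X Y; clear; lia.
pose p0 := imP phi (setT, Sid eF).
have cp : is_F_copy eF (@F_graph l t) p0.
  apply: (copy_map (copy_id sg)) => //; move=> x y _ _; exact: phi_inj.
have phv : phi v0 = top by apply: val_inj; rewrite vphi vt /fn eqxx.
have phu : phi u0 = lv by apply: val_inj; rewrite vphi vl /fn eq_sym (negPf vu) eqxx.
have w0v : w0 != v0 by apply/eqP => E; rewrite E irr in vw.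
have w0u : w0 != u0 by apply/eqP => E; rewrite E (negPf nvu) in vw.
exists p0, (phi w0); split.
- rewrite inE cp /p0 /imP /=; apply/andP; split; apply/imsetP.
    by exists v0.
  by exists u0.
- rewrite /p0 /imP /=; apply/imsetP => [[a _ E]].
  have : val iv = fn a by rewrite E vphi.
  rewrite /fn; case: ifP => av; first by move: ilt; clear; lia.
  case: ifP => au; first by move: li hl2; clear; lia.
  have := rng a (negbT av) (negbT au); move: li; clear; lia.
- rewrite /p0 /imP /= -phu -imset2E; apply: imset_f.
  by rewrite inE; apply/existsP; exists u0; apply/existsP; exists w0; rewrite sym wu eqxx.
- by rewrite vphi /fn (negPf w0v) (negPf w0u) idxw.
Qed.

Theorem lemma11 (VF : finType) (eF : rel VF) (t l : nat)
  (hF : simple_graph eF)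
  (hdiam : has_diameter eF 2)
  (ht : is_min_degree eF t)
  (ht2 : (2 <= t)%N)
  (hl : (#|VF| < l)%N) :
  forall i : nat, (l.+1 <= i)%N -> (i <= l + t - 1)%N ->
    delta_deg eF l t i < delta_deg eF l t l.
Proof.
move=> i li ui.
have [sym irr] := hF.
have [[v0 dv] mind] := ht.
have l0 : (0 < l)%N by move: hl; clear; lia.
have tl : (t < l)%N.
  have : (t <= #|VF|)%N by rewrite -dv; exact: max_card.
  by move: hl; clear; lia.
have [u0 /andP [vu nvu]] : exists u0, (v0 != u0) && ~~ eF v0 u0.
  case: (boolP [exists u, (v0 != u) && ~~ eF v0 u]) => [/existsP //|/existsPn H]; exfalso.
  have all : forall u, u != v0 -> eF v0 u.
    move=> u uv; move: (H u); rewrite eq_sym uv /=; by case: (eF v0 u).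
  have [_ [a [b nab]]] := hdiam.
  rewrite /= negb_or in nab; case/andP: nab => nab nex.
  have nab' : ~~ eF a b by apply/negP => E; move/existsP: nex; apply; exists b; rewrite E eqxx.
  have d0 : degree eF v0 = #|VF|.-1.
    rewrite /degree; have -> : [set w | eF v0 w] = [set~ v0].
      apply/setP => w; rewrite !inE; case: (eqVneq w v0) => [->|wv]; first by rewrite irr.
      by rewrite all.
    by rewrite cardsC1.
  have da : (degree eF a <= #|[set~ a] :\ b|)%N.
    apply: subset_leq_card; apply/subsetP => w; rewrite !inE => aw.
    apply/andP; split; first by apply/eqP => E; move: aw; rewrite E (negPf nab').
    by apply/eqP => E; rewrite E irr in aw.
  have cb := cardsD1 b [set~ a]; rewrite cardsC1 !inE eq_sym nab /= in cb.
  rewrite -d0 dv in cb; have := mind a; move: da cb; clear; lia.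
have [w0 [vw wu]] : exists w0, eF v0 w0 /\ eF w0 u0.
  have := hdiam.1 v0 u0; rewrite /= (negPf vu) /=.
  case/orP => [/existsP [w /andP [vw /eqP E]]|/existsP [w /andP [vw]]].
    by rewrite -E vw in nvu.
  case/orP => [/eqP E|/existsP [w' /andP [ww /eqP E]]].
    by rewrite -E vw in nvu.
  by exists w; rewrite -E.
have tlt : (l.*2.-1 < l.*2)%N by move: l0; clear; lia.
have llt : (l.-1 < l.*2)%N by move: l0; clear; lia.
have ilt : (i.-1 < l.*2)%N by move: ui tl; clear; lia.
pose top := Ordinal tlt; pose lv := Ordinal llt; pose iv := Ordinal ilt.
have [p0 [w [p0D niv w2 vw0]]] :=
  @witness VF eF l t top iv lv v0 u0 w0 hF dv hl erefl erefl
    (ltac:(move: li; clear; simpl; lia)) (ltac:(move: ui tl; clear; simpl; lia))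
    vu nvu vw wu.
rewrite (@delta_eq VF eF l t i top iv l0 erefl erefl).
rewrite (@delta_eq VF eF l t l top lv l0 erefl erefl) ltz_nat.
apply: (@card_lt VF eF l t top iv lv w p0) => //=.
- by move: li; clear; lia.
- by move: ui tl; clear; lia.
Qed.
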